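(* Let points $0,1,2,3$ of $\mathbb{P}^3(\mathbb{C})$ be represented by the standard basis vectors $e_0,e_1,e_2,e_3$ and points $i=4,\dots,9$ by arbitrary vectors $(x_i,y_i,z_i,w_i)$ (and $(x_i,y_i,z_i,w_i)$ for $i\le 3$ the corresponding standard basis coordinates). Let $N$ be the $10\times10$ matrix whose row $i$ ($i=0,\dots,9$) is $$(x_i^2,\ x_iy_i,\ x_iz_i,\ x_iw_i,\ y_i^2,\ y_iz_i,\ y_iw_i,\ z_i^2,\ z_iw_i,\ w_i^2),$$ let $M$ be the $4\times4$ matrix whose row indexed by $j\in\{6,7,8,9\}$ (in increasing order) is $\big([015j][234j],[012j][345j],[024j][135j],[045j][123j]\big)$, and let $Q=-x_5y_4z_5w_4 + x_4y_5z_5w_4 + x_5y_4z_4w_5 - x_4y_4z_5w_5$. Then $\det M = Q\cdot\det N$.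
   Context: $[abcd]$ denotes the determinant of the $4\times4$ matrix whose columns are the representative vectors of the points $a,b,c,d$. *)

(* Defs.v *)
From mathcomp Require Import all_boot all_order all_algebra all_field.
Set Implicit Arguments. Unset Strict Implicit. Unset Printing Implicit Defensive.
Import GRing.Theory.
Local Open Scope ring_scope.

Definition bracket (v : 'I_10 -> 'rV[algC]_4) (a b c d : 'I_10) : algC :=
  \det (\matrix_(r < 4, k < 4)
          (v (match val k with 0 => a | 1 => b | 2 => c | _ => d end)) ord0 r).

Definition cx (v : 'I_10 -> 'rV[algC]_4) i : algC := v i ord0 (inord 0).
Definition cy (v : 'I_10 -> 'rV[algC]_4) i : algC := v i ord0 (inord 1).
Definition cz (v : 'I_10 -> 'rV[algC]_4) i : algC := v i ord0 (inord 2).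
Definition cw (v : 'I_10 -> 'rV[algC]_4) i : algC := v i ord0 (inord 3).

Definition Nmat (v : 'I_10 -> 'rV[algC]_4) : 'M[algC]_10 :=
  \matrix_(i < 10, k < 10)
    (let x := cx v i in let y := cy v i in let z := cz v i in let w := cw v i in
     match val k with
     | 0 => x * x | 1 => x * y | 2 => x * z | 3 => x * w
     | 4 => y * y | 5 => y * z | 6 => y * w
     | 7 => z * z | 8 => z * w | _ => w * w end).

Definition p (n : nat) : 'I_10 := inord n.

Definition Mmat (v : 'I_10 -> 'rV[algC]_4) : 'M[algC]_4 :=
  \matrix_(r < 4, k < 4)
    (let j := p (6 + val r) in
     match val k with
     | 0 => bracket v (p 0) (p 1) (p 5) j * bracket v (p 2) (p 3) (p 4) j
     | 1 => bracket v (p 0) (p 1) (p 2) j * bracket v (p 3) (p 4) (p 5) j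
     | 2 => bracket v (p 0) (p 2) (p 4) j * bracket v (p 1) (p 3) (p 5) j
     | _ => bracket v (p 0) (p 4) (p 5) j * bracket v (p 1) (p 2) (p 3) j end).

Definition Qpoly (v : 'I_10 -> 'rV[algC]_4) : algC :=
  let x := cx v in let y := cy v in let z := cz v in let w := cw v in
  - (x (p 5) * y (p 4) * z (p 5) * w (p 4)) + x (p 4) * y (p 5) * z (p 5) * w (p 4)
  + x (p 5) * y (p 4) * z (p 4) * w (p 5) - x (p 4) * y (p 4) * z (p 5) * w (p 5).

(* Main.v *)
Require Import Defs.
From mathcomp Require Import all_boot all_order all_algebra all_field.
From mathcomp Require Import ring.
Set Implicit Arguments. Unset Strict Implicit. Unset Printing Implicit Defensive.
Import GRing.Theory.
Local Open Scope ring_scope.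

Section L.
Variable R : comNzRingType.
Fixpoint lsum (m : nat) (g : nat -> R) : R :=
  match m with 0 => 0 | m'.+1 => lsum m' g + g m' end.
Definition mybump (j k : nat) := if Nat.leb j k then k.+1 else k.
Definition sgn (j : nat) (a : R) := if odd j then - a else a.
Fixpoint ldetO (n : nat) (f : nat -> nat -> option R) : R :=
  match n with 0 => 1 | n'.+1 => lsum n (fun j => match f 0%N j with None => 0
     | Some a => sgn j a * ldetO n' (fun i k => f i.+1 (mybump j k)) end) end.

Lemma lsumE m g : lsum m g = \sum_(j < m) g j.
Proof. elim: m => [|m IH] /=; first by rewrite big_ord0. by rewrite big_ord_recr IH. Qed.

Lemma mybumpE j k : mybump j k = bump j k.
Proof. rewrite /mybump /bump; case: (PeanoNat.Nat.leb_spec j k) => H.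
  by have /leP -> := H; rewrite add1n.
  by have -> : (j <= k)%N = false by apply/negbTE; rewrite -ltnNge; apply/ltP. Qed.

Lemma ldetOS n f : ldetO n.+1 f = lsum n.+1 (fun j => match f 0%N j with None => 0
     | Some a => sgn j a * ldetO n (fun i k => f i.+1 (mybump j k)) end).
Proof. by []. Qed.

Lemma ldetOP n (f : nat -> nat -> option R) (A : 'M[R]_n) :
  (forall i j : 'I_n, A i j = odflt 0 (f i j)) -> \det A = ldetO n f.
Proof.
elim: n f A => [|n IH] f A HA; first by rewrite det_mx00.
rewrite (expand_det_row A ord0) ldetOS lsumE; apply: eq_bigr => j _.
rewrite HA /=; case: (f 0%N j) => [a|]; last by rewrite mul0r.
rewrite /cofactor /sgn /= add0n -signr_odd.
rewrite (IH (fun i k => f i.+1 (mybump j k))); last first.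
  by move=> i k; rewrite !mxE HA /= mybumpE.
by case: (odd j); rewrite ?expr0 ?expr1 ?mul1r ?mulN1r ?mulNr ?mulrN.
Qed.
End L.

Definition mulo (a b : option algC) : option algC :=
  match a, b with Some x, Some y => Some (x * y) | _, _ => None end.
Lemma muloE a b : odflt 0 (mulo a b) = odflt 0 a * odflt 0 b.
Proof. by case: a => [a|]; case: b => [b|] //=; rewrite ?mul0r ?mulr0. Qed.

Definition cc (v : 'I_10 -> 'rV[algC]_4) (i r : nat) : option algC :=
  if Nat.ltb i 4 then (if Nat.eqb i r then Some 1 else None)
  else Some (v (p i) ord0 (inord r)).

Section S.
Variable v : 'I_10 -> 'rV[algC]_4.
Hypothesis hstd : forall (i : 'I_10) (k : 'I_4), (val i < 4)%N ->
            v i ord0 k = (val i == val k)%:R.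

Lemma ccP (i : 'I_10) (r : 'I_4) : v i ord0 r = odflt 0 (cc v i r).
Proof.
rewrite /cc; case: (PeanoNat.Nat.ltb_spec i 4) => H.
  rewrite hstd; last by apply/ltP.
  by case: (PeanoNat.Nat.eqb_spec i r) => E; case: eqP.
by rewrite /p !inord_val.
Qed.

Lemma ccP' (i : 'I_10) (r : nat) : (r < 4)%N ->
  v i ord0 (inord r) = odflt 0 (cc v i r).
Proof. by move=> Hr; rewrite ccP inordK. Qed.

Definition fN (i k : nat) : option algC :=
  let x := cc v i 0 in let y := cc v i 1 in let z := cc v i 2 in let w := cc v i 3 in
     match k with
     | 0 => mulo x x | 1 => mulo x y | 2 => mulo x z | 3 => mulo x w
     | 4 => mulo y y | 5 => mulo y z | 6 => mulo y w
     | 7 => mulo z z | 8 => mulo z w | _ => mulo w w end.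

Lemma NmatE (i k : 'I_10) : Nmat v i k = odflt 0 (fN i k).
Proof.
rewrite mxE /fN /cx /cy /cz /cw !ccP' //.
by case: k => [[|[|[|[|[|[|[|[|[|[|k]]]]]]]]]] Hk] //=; rewrite muloE.
Qed.

Definition bL (a b c d : nat) : algC :=
  ldetO 4 (fun r k => cc v (match k with 0 => a | 1 => b | 2 => c | _ => d end) r).

Lemma bracketE (a b c d : nat) : (a < 10)%N -> (b < 10)%N -> (c < 10)%N -> (d < 10)%N ->
  bracket v (p a) (p b) (p c) (p d) = bL a b c d.
Proof.
move=> Ha Hb Hc Hd; apply: ldetOP => r k; rewrite mxE ccP.
by case: k => [[|[|[|[|k]]]] Hk] //=; rewrite /p inordK.
Qed.

Definition fM (r k : nat) : option algC :=
  let j := Nat.add 6 r in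
  Some (match k with
     | 0 => bL 0 1 5 j * bL 2 3 4 j
     | 1 => bL 0 1 2 j * bL 3 4 5 j
     | 2 => bL 0 2 4 j * bL 1 3 5 j
     | _ => bL 0 4 5 j * bL 1 2 3 j end).

Lemma MmatE (r k : 'I_4) : Mmat v r k = odflt 0 (fM r k).
Proof.
have Hr : (6 + r < 10)%N by case: r => [[|[|[|[|r]]]] ?].
rewrite mxE /fM /=; rewrite !bracketE //.
Qed.

Lemma main : \det (Mmat v) = Qpoly v * \det (Nmat v).
Proof.
rewrite (ldetOP MmatE) (ldetOP NmatE).
cbv beta iota zeta delta [ldetO lsum mybump sgn fM fN bL cc mulo Nat.ltb Nat.leb Nat.eqb Nat.add odd negb].
rewrite /Qpoly /cx /cy /cz /cw.
Time ring.
Qed.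
End S.

Unset Implicit Arguments.
Theorem mainTheorem7 (v : 'I_10 -> 'rV[algC]_4)
  (hstd : forall (i : 'I_10) (k : 'I_4), (val i < 4)%N ->
            v i ord0 k = (val i == val k)%:R) :
  \det (Mmat v) = Qpoly v * \det (Nmat v).
Proof. exact: (@main v hstd). Qed.
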